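(* Let $A$ be a quasi-quantale such that $(\bigvee X)a=\bigvee\{xa\mid x\in X\}$ for every subset $X\subseteq A$ and every $a\in A$. Then for each multiplicative nucleus $d$ on $A$, the set of fixed points $A_d=\{a\in A\mid d(a)=a\}$ (with the order of $A$, joins $d(\bigvee X)$ and meets as in $A$) is a frame.
   Context: A quasi-quantale is a complete lattice $A$ equipped with an associative binary operation $(a,b)\mapsto ab$ such that for every directed subset $X\subseteq A$ (non-empty, and any two elements of $X$ have an upper bound in $X$) and every $a\in A$: $(\bigvee X)a=\bigvee\{xa\mid x\in X\}$ and $a(\bigvee X)=\bigvee\{ax\mid x\in X\}$. An inflator on $A$ is a monotone map $d\colon A\to A$ with $a\leq d(a)$ for all $a$. A multiplicative nucleus is an inflator $d$ with $d\circ d=d$, $d(a\wedge b)=d(a)\wedge d(b)$ and $d(ab)=d(a)\wedge d(b)$ for all $a,b\in A$. A frame is a complete lattice satisfying $a\wedge\bigvee X=\bigvee\{a\wedge x\mid x\in X\}$ for all $a$ and all subsets $X$. *)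

(* Defs.v *)
Section Defs.
Context {A : Type} (le : A -> A -> Prop).

Definition is_complete_lattice (sup : (A -> Prop) -> A) : Prop :=
  (forall a, le a a) /\
  (forall a b c, le a b -> le b c -> le a c) /\
  (forall a b, le a b -> le b a -> a = b) /\
  (forall (X : A -> Prop) x, X x -> le x (sup X)) /\
  (forall (X : A -> Prop) z, (forall x, X x -> le x z) -> le (sup X) z).

Definition meet (sup : (A -> Prop) -> A) (a b : A) : A :=
  sup (fun z => le z a /\ le z b).

Definition directed (X : A -> Prop) : Prop :=
  (exists x, X x) /\
  (forall x y, X x -> X y -> exists z, X z /\ le x z /\ le y z).

Definition rimage (mul : A -> A -> A) (X : A -> Prop) (a : A) : A -> Prop :=
  fun y => exists x, X x /\ y = mul x a.
Definition limage (mul : A -> A -> A) (a : A) (X : A -> Prop) : A -> Prop :=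
  fun y => exists x, X x /\ y = mul a x.

Definition quasi_quantale (sup : (A -> Prop) -> A) (mul : A -> A -> A) : Prop :=
  is_complete_lattice sup /\
  (forall a b c, mul (mul a b) c = mul a (mul b c)) /\
  (forall (X : A -> Prop) a, directed X ->
     mul (sup X) a = sup (rimage mul X a) /\
     mul a (sup X) = sup (limage mul a X)).

Definition inflator (d : A -> A) : Prop :=
  (forall a b, le a b -> le (d a) (d b)) /\ (forall a, le a (d a)).

Definition multiplicative_nucleus (sup : (A -> Prop) -> A) (mul : A -> A -> A)
  (d : A -> A) : Prop :=
  inflator d /\
  (forall a, d (d a) = d a) /\
  (forall a b, d (meet sup a b) = meet sup (d a) (d b)) /\
  (forall a b, d (mul a b) = meet sup (d a) (d b)).

Definition fixed_points (d : A -> A) : A -> Prop := fun a => d a = a.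

Definition is_lub_in (P : A -> Prop) (X : A -> Prop) (s : A) : Prop :=
  P s /\ (forall x, X x -> le x s) /\
  (forall z, P z -> (forall x, X x -> le x z) -> le s z).

Definition is_glb_in (P : A -> Prop) (X : A -> Prop) (m : A) : Prop :=
  P m /\ (forall x, X x -> le m x) /\
  (forall z, P z -> (forall x, X x -> le z x) -> le z m).

Definition pair_set (a b : A) : A -> Prop := fun y => y = a \/ y = b.

(* The sub-poset (P, le) is a frame: a complete lattice (every subset of P
   has a join in P) in which a /\ \/X = \/ {a /\ x | x in X}, all joins
   and meets computed in (P, le). *)
Definition is_frame_sub (P : A -> Prop) : Prop :=
  (forall X : A -> Prop, (forall x, X x -> P x) -> exists s, is_lub_in P X s) /\
  (forall (a : A) (X : A -> Prop) s m t,
     P a -> (forall x, X x -> P x) ->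
     is_lub_in P X s ->
     is_glb_in P (pair_set a s) m ->
     is_lub_in P (fun y => exists x, X x /\ is_glb_in P (pair_set a x) y) t ->
     m = t).

End Defs.

(* Main.v *)
Require Import Defs.

Theorem corollary3p11 (A : Type) (le : A -> A -> Prop)
  (sup : (A -> Prop) -> A) (mul : A -> A -> A) :
  quasi_quantale le sup mul ->
  (forall (X : A -> Prop) (a : A), mul (sup X) a = sup (rimage mul X a)) ->
  forall d : A -> A, multiplicative_nucleus le sup mul d ->
    is_frame_sub le (fixed_points d) /\
    (forall X : A -> Prop, (forall x, X x -> fixed_points d x) ->
       is_lub_in le (fixed_points d) X (d (sup X))) /\
    (forall a b, fixed_points d a -> fixed_points d b ->
       is_glb_in le (fixed_points d) (pair_set a b) (meet le sup a b)).
Proof.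
  intros [[Hrefl [Htrans [Hanti [Hub Hlub]]]] _] Hdist d
         [[Hmono Hinf] [Hidem [Hdmeet Hdmul]]].
  unfold fixed_points in *.
  assert (Mle1 : forall a b, le (meet le sup a b) a).
  { intros a b; apply Hlub; intros z [H1 H2]; exact H1. }
  assert (Mle2 : forall a b, le (meet le sup a b) b).
  { intros a b; apply Hlub; intros z [H1 H2]; exact H2. }
  assert (Mgl : forall a b z, le z a -> le z b -> le z (meet le sup a b)).
  { intros a b z H1 H2; apply Hub; split; assumption. }
  assert (P2 : forall X : A -> Prop, (forall x, X x -> d x = x) ->
       is_lub_in le (fun a => d a = a) X (d (sup X))).
  { intros X HX; split; [apply Hidem|split].
    - intros x Hx; apply Htrans with (sup X); [apply Hub; auto | apply Hinf].
    - intros z Hz Hzx. rewrite <- Hz. apply Hmono. apply Hlub; auto. }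
  assert (P3 : forall a b, d a = a -> d b = b ->
       is_glb_in le (fun a => d a = a) (pair_set a b) (meet le sup a b)).
  { intros a b Ha Hb; split; [rewrite Hdmeet, Ha, Hb; reflexivity | split].
    - intros x [->| ->]; auto.
    - intros z _ Hz; apply Mgl; apply Hz; unfold pair_set; auto. }
  split; [split|split; assumption].
  - intros X HX; exists (d (sup X)); auto.
  - intros a X s m t Ha HX Hs Hm Ht.
    destruct Hm as [Pm [Mlow Mgr]].
    destruct Ht as [Pt [Tup Tlst]].
    destruct Hs as [Ps [Sup Slst]].
    assert (Hms : le m a /\ le m s).
    { split; apply Mlow; unfold pair_set; auto. }
    apply Hanti.
    +
      assert (Hsd : le s (d (sup X))).
      { apply Slst; [apply Hidem|]. intros x Hx.
        apply Htrans with (sup X); [apply Hub; auto | apply Hinf]. }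
      apply Htrans with (meet le sup (d (sup X)) (d a)).
      { apply Mgl; [apply Htrans with s; tauto | rewrite Ha; tauto]. }
      rewrite <- Hdmul, Hdist. rewrite <- Pt. apply Hmono.
      apply Hlub. intros y [x [Hx ->]].
      apply Htrans with (d (mul x a)); [apply Hinf|].
      rewrite Hdmul, (HX x Hx), Ha.
      apply Htrans with (meet le sup a x).
      { apply Mgl; auto. }
      apply Tup. exists x; split; auto.
    +
      apply Tlst; [exact Pm|].
      intros y [x [Hx [Py [Ylow _]]]].
      apply Mgr; [exact Py|].
      intros w [-> | ->].
      * apply Ylow; unfold pair_set; auto.
      * apply Htrans with x; [apply Ylow; unfold pair_set; auto | apply Sup; auto].
Qed.
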